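(* For every admissible pair $(a,b)$ (as described in the context), the canonical cube category $\mathbb{C}_{(a,b)}$ is isomorphic to the monoidal subcategory $\mathcal{S}_{(a,b)}$ of $(\mathbf{Top},\times,1)$ generated by the interval $[0,1]$ with respect to the language $L_{(a,b)}$.
   Context: Structural rules: $\mathsf{w}$ (weakening), $\mathsf{e}$ (exchange), $\mathsf{c}$ (contraction). The admissible sets of structural rules $a$ are $\emptyset,\{\mathsf w\},\{\mathsf e\},\{\mathsf w,\mathsf e\},\{\mathsf e,\mathsf c\},\{\mathsf w,\mathsf e,\mathsf c\}$. The admissible signatures $b$ are $(0,1)$, $(0,1,\vee)$, $(0,1,\wedge)$, $(0,1,\vee,\wedge)$, $(0,1,{}')$, $(0,1,\vee,\wedge,{}')$, where $0,1$ are constants, $\vee,\wedge$ binary and ${}'$ unary. The language $L_{(a,b)}$ has terms built from variables and the function symbols of $b$. The canonical cube category $\mathbb{C}_{(a,b)}$ is the syntactic (strict monoidal) category of the theory of the structure $[0,1]$ (with $0,1$ the endpoints, $x\vee y=\max\{x,y\}$, $x\wedge y=\min\{x,y\}$, $x'=1-x$) in $L_{(a,b)}$: its objects are $[n]$, $n\ge 0$ (contexts of $n$ variables $x_1,\dots,x_n$), with $[m]\otimes[n]=[m+n]$; a morphism $[m]\to[n]$ is an $n$-tuple $(t_1,\dots,t_n)$ of terms in the context $x_1,\dots,x_m$ such that, listing all variable occurrences in $t_1,\dots,t_n$ from left to right, every variable occurs unless $\mathsf w\in a$, the variables occur in the order $x_1,\dots,x_m$ unless $\mathsf e\in a$, and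 no variable occurs twice unless $\mathsf c\in a$; two such tuples are identified when they define the same function $[0,1]^m\to[0,1]^n$; composition is substitution. The subcategory $\mathcal S_{(a,b)}$ of $\mathbf{Top}$ has objects $[0,1]^n$ and morphisms generated, under composition and cartesian product of maps, by identities, the operations of $b$ on $[0,1]$ (the points $0,1:1\to[0,1]$, $\max$, $\min$, $x\mapsto 1-x$ as applicable), and the structural maps allowed by $a$: the map $[0,1]\to 1$ if $\mathsf w\in a$, the swap $[0,1]^2\to[0,1]^2$ if $\mathsf e\in a$, the diagonal $[0,1]\to[0,1]^2$ if $\mathsf c\in a$. *)

(* Defs.v *)
From HB Require Import structures.
From mathcomp Require Import all_boot all_order all_algebra.
From mathcomp Require Import reals.
From mathcomp Require Import lra.

Set Implicit Arguments.
Unset Strict Implicit.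
Unset Printing Implicit Defensive.

Import Order.TTheory GRing.Theory Num.Theory.
Local Open Scope ring_scope.

(* A set of structural rules: which of w (weakening), e (exchange),
   c (contraction) it contains. *)
Record struct_rules := StructRules { has_w : bool; has_e : bool; has_c : bool }.

(* Admissible sets: {}, {w}, {e}, {w,e}, {e,c}, {w,e,c}
   i.e. exactly those where c implies e. *)
Definition admissible_rules (a : struct_rules) : bool := has_c a ==> has_e a.

(* A signature: constants 0,1 always; which of join, meet, negation. *)
Record signature := Signature { has_join : bool; has_meet : bool; has_neg : bool }.

(* Admissible signatures: (0,1), (0,1,v), (0,1,^), (0,1,v,^), (0,1,'),
   (0,1,v,^,') i.e. exactly those where ' implies (v present iff ^ present). *)
Definition admissible_sig (b : signature) : bool :=
  has_neg b ==> (has_join b == has_meet b).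

(* Terms of L_(a,b) in the context x_1,...,x_m (variable x_(i+1) is     *)
(* tVar i with i : 'I_m).                                               *)

Inductive term (m : nat) : Type :=
| tVar of 'I_m
| tZero
| tOne
| tJoin of term m & term m
| tMeet of term m & term m
| tNeg of term m.

Arguments tZero {m}.
Arguments tOne {m}.

Fixpoint in_sig (b : signature) m (t : term m) : bool :=
  match t with
  | tVar _ => true
  | tZero | tOne => true
  | tJoin t1 t2 => [&& has_join b, in_sig b t1 & in_sig b t2]
  | tMeet t1 t2 => [&& has_meet b, in_sig b t1 & in_sig b t2]
  | tNeg t1 => has_neg b && in_sig b t1
  end.

Fixpoint occ m (t : term m) : seq nat :=
  match t with
  | tVar i => [:: nat_of_ord i]
  | tZero | tOne => [::]
  | tJoin t1 t2 | tMeet t1 t2 => occ t1 ++ occ t2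
  | tNeg t1 => occ t1
  end.

Definition tuple_occ m n (ts : n.-tuple (term m)) : seq nat :=
  flatten (map (@occ m) ts).

(* (t_1,...,t_n) is a morphism [m] -> [n] of C_(a,b) (before quotienting) *)
Definition admissible_tuple (a : struct_rules) (b : signature) m n
    (ts : n.-tuple (term m)) : bool :=
  [&& all (@in_sig b m) ts,
      has_w a || all (fun i => i \in tuple_occ ts) (iota 0 m),
      has_e a || sorted leq (tuple_occ ts) &
      has_c a || uniq (tuple_occ ts)].

Fixpoint subst m n (ts : n.-tuple (term m)) (t : term n) : term m :=
  match t with
  | tVar i => tnth ts i
  | tZero => tZero
  | tOne => tOne
  | tJoin t1 t2 => tJoin (subst ts t1) (subst ts t2)
  | tMeet t1 t2 => tMeet (subst ts t1) (subst ts t2)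
  | tNeg t1 => tNeg (subst ts t1)
  end.

Definition id_tuple m : m.-tuple (term m) := [tuple tVar i | i < m].

(* composite of ts : [m] -> [n] followed by us : [n] -> [p] *)
Definition comp_tuple m n p (ts : n.-tuple (term m)) (us : p.-tuple (term n))
  : p.-tuple (term m) := map_tuple (subst ts) us.

Fixpoint rename m m' (f : 'I_m -> 'I_m') (t : term m) : term m' :=
  match t with
  | tVar i => tVar (f i)
  | tZero => tZero
  | tOne => tOne
  | tJoin t1 t2 => tJoin (rename f t1) (rename f t2)
  | tMeet t1 t2 => tMeet (rename f t1) (rename f t2)
  | tNeg t1 => tNeg (rename f t1)
  end.

Definition tensor_tuple m n m' n' (ts : n.-tuple (term m)) (ts' : n'.-tuple (term m'))
  : (n + n').-tuple (term (m + m')) :=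
  cat_tuple (map_tuple (rename (@lshift m m')) ts)
            (map_tuple (rename (@rshift m m')) ts').

Section Interval.
Variable R : realType.

Definition unit_interval : Type := {x : R | (0 : R) <= x <= (1 : R)}.

Lemma i0_proof : (0 : R) <= 0 <= (1 : R). Proof. by apply/andP; split; lra. Qed.
Lemma i1_proof : (0 : R) <= 1 <= (1 : R). Proof. by apply/andP; split; lra. Qed.
Definition i0 : unit_interval := exist _ 0 i0_proof.
Definition i1 : unit_interval := exist _ 1 i1_proof.

Lemma imax_proof (x y : unit_interval) :
  0 <= Num.max (proj1_sig x) (proj1_sig y) <= (1 : R).
Proof.
move: (proj2_sig x) (proj2_sig y) => /andP[x0 x1] /andP[y0 y1].
by rewrite le_max x0 ge_max x1 y1.
Qed.
Definition imax (x y : unit_interval) : unit_interval := exist _ (Num.max (proj1_sig x) (proj1_sig y)) (imax_proof x y).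

Lemma imin_proof (x y : unit_interval) :
  0 <= Num.min (proj1_sig x) (proj1_sig y) <= (1 : R).
Proof.
move: (proj2_sig x) (proj2_sig y) => /andP[x0 x1] /andP[y0 y1].
by rewrite le_min x0 y0 ge_min x1.
Qed.
Definition imin (x y : unit_interval) : unit_interval := exist _ (Num.min (proj1_sig x) (proj1_sig y)) (imin_proof x y).

Lemma icompl_proof (x : unit_interval) : 0 <= 1 - proj1_sig x <= (1 : R).
Proof. move: (proj2_sig x) => /andP[x0 x1]; apply/andP; split; lra. Qed.
Definition icompl (x : unit_interval) : unit_interval := exist _ (1 - proj1_sig x) (icompl_proof x).

(* [0,1]^n ; [0,1]^0 is the one-point space 1 *)
Definition cube (n : nat) : Type := 'I_n -> unit_interval.

Fixpoint eval m (x : cube m) (t : term m) : unit_interval :=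
  match t with
  | tVar i => x i
  | tZero => i0
  | tOne => i1
  | tJoin t1 t2 => imax (eval x t1) (eval x t2)
  | tMeet t1 t2 => imin (eval x t1) (eval x t2)
  | tNeg t1 => icompl (eval x t1)
  end.

Definition interp m n (ts : n.-tuple (term m)) : cube m -> cube n :=
  fun x k => eval x (tnth ts k).

(* cartesian product of maps, with [0,1]^m x [0,1]^m' = [0,1]^(m+m') *)
Definition prod_map m n m' n' (f : cube m -> cube n) (g : cube m' -> cube n')
  : cube (m + m') -> cube (n + n') :=
  fun x k => match split k with
             | inl i => f (fun j => x (lshift m' j)) i
             | inr i => g (fun j => x (rshift m j)) i
             end.

Definition pt0 : cube 0 -> cube 1 := fun _ _ => i0.
Definition pt1 : cube 0 -> cube 1 := fun _ _ => i1.
Definition max_map : cube 2 -> cube 1 := fun x _ => imax (x ord0) (x ord_max).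
Definition min_map : cube 2 -> cube 1 := fun x _ => imin (x ord0) (x ord_max).
Definition compl_map : cube 1 -> cube 1 := fun x _ => icompl (x ord0).
Definition bang_map : cube 1 -> cube 0 := fun _ _ => i0. (* 'I_0 is empty *)
Definition swap_map : cube 2 -> cube 2 :=
  fun x k => if k == ord0 then x ord_max else x ord0.
Definition diag_map : cube 1 -> cube 2 := fun x _ => x ord0.

(* morphisms of S_(a,b): the maps generated under composition and
   cartesian product by identities, the operations of b and the
   structural maps allowed by a *)
Inductive genS (a : struct_rules) (b : signature) : forall m n, (cube m -> cube n) -> Prop :=
| genS_id n : genS a b (@id (cube n))
| genS_zero : genS a b pt0
| genS_one : genS a b pt1
| genS_max : has_join b -> genS a b max_map
| genS_min : has_meet b -> genS a b min_map
| genS_compl : has_neg b -> genS a b compl_map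
| genS_weak : has_w a -> genS a b bang_map
| genS_exch : has_e a -> genS a b swap_map
| genS_contr : has_c a -> genS a b diag_map
| genS_comp m n p (f : cube m -> cube n) (g : cube n -> cube p) :
    genS a b f -> genS a b g -> genS a b (g \o f)
| genS_prod m n m' n' (f : cube m -> cube n) (g : cube m' -> cube n') :
    genS a b f -> genS a b g -> genS a b (prod_map f g).

End Interval.

Arguments interp R {m n} ts x k.
Arguments eval R {m} x t.

(* Main.v *)
Require Import Defs.
From HB Require Import structures.
From mathcomp Require Import all_boot all_order all_algebra.
From mathcomp Require Import reals boolp.
From mathcomp Require Import zify.

Set Implicit Arguments.
Unset Strict Implicit.
Unset Printing Implicit Defensive.

Section Main.
Variable R : realType.
Variables (a : struct_rules) (b : signature).
Hypothesis Ha : admissible_rules a.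
Hypothesis Hb : admissible_sig b.

Local Notation I := (unit_interval R).
Local Notation cube := (cube R).
Local Notation GS := (genS a b).

Definition ext m (x : cube m) (i : nat) : I :=
  if insub i is Some j then x j else i0 R.

Lemma extE m (x : cube m) (j : 'I_m) : ext x j = x j.
Proof. by rewrite /ext valK. Qed.

Lemma extO m (x : cube m) i (H : i < m) : ext x i = x (Ordinal H).
Proof. by rewrite -extE. Qed.

Lemma ext_out m (x : cube m) i : m <= i -> ext x i = i0 R.
Proof. by move=> H; rewrite /ext insubN // -leqNgt. Qed.

Lemma ext_lshift m m' (x : cube (m + m')) i : i < m ->
  ext (fun j => x (lshift m' j)) i = ext x i.
Proof.
move=> H; rewrite (extO _ H) (@extO _ _ i (ltn_addr _ H)); congr x; exact: val_inj.
Qed.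

Lemma ext_rshift m m' (x : cube (m + m')) i :
  ext (fun j => x (rshift m j)) i = ext x (m + i).
Proof.
case: (ltnP i m') => H.
  rewrite (extO _ H).
  have H' : m + i < m + m' by rewrite ltn_add2l.
  by rewrite (extO _ H'); congr x; apply: val_inj.
by rewrite !ext_out // leq_add2l.
Qed.

Definition Sel m k (f : nat -> nat) : cube m -> cube k :=
  fun x j => ext x (f j).
Arguments Sel : clear implicits.

Lemma Sel_ext m k f g : (forall j, j < k -> f j = g j) -> Sel m k f = Sel m k g.
Proof. by move=> H; apply: funext => x; apply: funext => j; rewrite /Sel H. Qed.

Arguments Sel_ext {m k f g}.

Lemma Sel_comp m n p f g : (forall j, j < p -> g j < n) ->
  Sel n p g \o Sel m n f = Sel m p (f \o g).
Proof.
move=> H; apply: funext => x; apply: funext => j /=.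
by rewrite /Sel (extO _ (H _ (ltn_ord j))).
Qed.

Lemma Sel_prod m k m' k' f f' : (forall j, j < k -> f j < m) ->
  prod_map (Sel m k f) (Sel m' k' f') =
  Sel (m + m') (k + k') (fun j => if j < k then f j else m + f' (j - k)).
Proof.
move=> H; apply: funext => x; apply: funext => j.
rewrite /prod_map /Sel; case: splitP => i Hi; rewrite Hi.
  by rewrite ?ltn_ord ext_lshift //; apply: H.
by rewrite ?ltnNge ?leq_addr /= ext_rshift addKn.
Qed.

Lemma GS_comp m n p f g h : GS (Sel m n f) -> GS (Sel n p g) ->
  (forall j, j < p -> g j < n) -> (forall j, j < p -> h j = f (g j)) ->
  GS (Sel m p h).
Proof.
move=> G1 G2 H1 H2; rewrite (Sel_ext H2).
have -> : Sel m p (fun j => f (g j)) = Sel m p (f \o g) by [].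
by rewrite -(@Sel_comp m n) //; apply: genS_comp.
Qed.

Lemma GS_prod m k m' k' f f' M K g : (forall j, j < k -> f j < m) ->
  GS (Sel m k f) -> GS (Sel m' k' f') -> M = m + m' -> K = k + k' ->
  (forall j, j < K -> g j = if j < k then f j else m + f' (j - k)) ->
  GS (Sel M K g).
Proof.
move=> H G1 G2 -> -> Hg; rewrite (Sel_ext Hg) -Sel_prod //.
exact: genS_prod.
Qed.

Lemma GS_id m f : (forall j, j < m -> f j = j) -> GS (Sel m m f).
Proof.
move=> H; have -> : Sel m m f = id.
  by apply: funext => x; apply: funext => j; rewrite /Sel H // extE.
exact: genS_id.
Qed.

Lemma GS_bang f : has_w a -> GS (Sel 1 0 f).
Proof.
move=> Hw; have -> : Sel 1 0 f = @bang_map R.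
  by apply: funext => x; apply: funext => -[].
exact: genS_weak.
Qed.

Lemma GS_swap f : has_e a -> f 0 = 1 -> f 1 = 0 -> GS (Sel 2 2 f).
Proof.
move=> He H0 H1; have -> : Sel 2 2 f = @swap_map R.
  apply: funext => x; apply: funext => -[[|[|//]] Hj]; rewrite /Sel /swap_map /=.
    by rewrite H0 (extO _ (isT : 1 < 2)); congr x; apply: val_inj.
  by rewrite H1 (extO _ (isT : 0 < 2)); congr x; apply: val_inj.
exact: genS_exch.
Qed.

Lemma GS_diag f : has_c a -> f 0 = 0 -> f 1 = 0 -> GS (Sel 1 2 f).
Proof.
move=> Hc H0 H1; have -> : Sel 1 2 f = @diag_map R.
  apply: funext => x; apply: funext => -[[|[|//]] Hj]; rewrite /Sel /diag_map /=.
    by rewrite H0 (extO _ (isT : 0 < 1)); congr x; apply: val_inj.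
  by rewrite H1 (extO _ (isT : 0 < 1)); congr x; apply: val_inj.
exact: genS_contr.
Qed.


Lemma GS_copies c : (c = 0 -> has_w a) -> (1 < c -> has_c a) ->
  GS (Sel 1 c (fun _ => 0)).
Proof.
elim: c => [|c IH] Hw Hc; first exact: GS_bang (Hw erefl).
case: c IH Hw Hc => [|c] IH Hw Hc; first by apply: GS_id => -[].
apply: (@GS_comp 1 2 (c.+2) (fun _ => 0) (fun j => if j < 1 then 0 else 1 + 0)).
- exact: GS_diag (Hc isT) _ _.
- apply: (@GS_prod 1 1 1 c.+1 (fun _ => 0) (fun _ => 0)) => //.
    by apply: GS_id => -[].
  by apply: IH => // _; apply: Hc.
- by move=> [|j].
- by [].
Qed.

Lemma sorted_split0 (s : seq nat) : sorted leq s ->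
  s = nseq (count_mem 0 s) 0 ++ [seq x <- s | 0 < x].
Proof.
elim: s => [//|x s IH] /= Hs.
have Hs' : sorted leq s by case: s Hs {IH} => // y s /andP[].
case: x Hs => [|x] Hs /=; first by rewrite add0n -IH.
have Hall : all (leq x.+1) s by apply: (order_path_min leq_trans Hs).
rewrite add0n.
have -> : count_mem 0 s = 0.
  apply/eqP; rewrite -leqn0 leqNgt -has_count; apply/hasP => -[y /(allP Hall)].
  by move=> Hy /eqP Hy0; move: Hy; rewrite Hy0.
have -> : [seq x0 <- s | 0 < x0] = s.
  by apply/all_filterP/allP => y /(allP Hall); apply: leq_trans.
by [].
Qed.

Lemma GS_sorted m s : all (fun i => i < m) s -> sorted leq s ->
  has_w a || all (fun i => i \in s) (iota 0 m) -> has_c a || uniq s ->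
  GS (Sel m (size s) (nth 0 s)).
Proof.
elim: m s => [|m IH] s Hall Hsort Hcov Huniq.
  case: s Hall {Hsort Hcov Huniq} => [|x s] //= _.
  by apply: GS_id.
set c0 := count_mem 0 s.
set s' := [seq i.-1 | i <- [seq x <- s | 0 < x]].
have Hs' : [seq x <- s | 0 < x] = [seq i.+1 | i <- s'].
  rewrite /s' -map_comp -[LHS]map_id; apply/eq_in_map => y.
  by rewrite mem_filter /= => /andP[Hy _]; rewrite prednK.
have Es : s = nseq c0 0 ++ [seq i.+1 | i <- s'] by rewrite -Hs'; exact: sorted_split0.
apply: (@GS_prod 1 c0 m (size s') (fun _ => 0) (nth 0 s')) => //.
- apply: GS_copies.
    move=> Hc; case/orP: Hcov => // /allP /(_ 0).
    rewrite mem_iota /= => /(_ isT) H0.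
    by move: Hc; rewrite /c0 => /eqP; rewrite -leqn0 leqNgt -has_count has_pred1 H0.
  move=> Hc; case/orP: Huniq => // Hu.
  by move: Hc; rewrite /c0 count_uniq_mem //; case: (0 \in s).
- apply: IH.
  + rewrite /s' all_map; apply/allP => y; rewrite mem_filter => /andP[Hy Hys] /=.
    by move: (allP Hall y Hys); rewrite -(ltn_predK Hy) ltnS.
  + rewrite /s'; apply: (@homo_sorted _ _ _ leq); first by move=> [|x] [|y].
    by apply: sorted_filter => //; exact: leq_trans.
  + case/orP: Hcov => [->//|/allP Hc]; apply/orP; right; apply/allP => i.
    rewrite mem_iota /= => Hi; rewrite /s'; apply/mapP; exists i.+1 => //.
    by rewrite mem_filter /=; apply: Hc; rewrite mem_iota.
  + case/orP: Huniq => [->//|Hu]; apply/orP; right; rewrite /s' map_inj_in_uniq.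
      exact: filter_uniq.
    move=> x y; rewrite !mem_filter => /andP[Hx _] /andP[Hy _] E.
    by rewrite -(prednK Hx) -(prednK Hy) E.
- by rewrite {1}Es size_cat size_nseq size_map.
- move=> j Hj; rewrite {1}Es nth_cat size_nseq.
  case: ifP => Hjc; first by rewrite nth_nseq Hjc.
  have Hj' : j - c0 < size s'.
    by move: Hj; rewrite {1}Es size_cat size_nseq size_map; move: Hjc; lia.
  by rewrite (nth_map 0) // add1n.
Qed.

Lemma GS_rot j : has_e a ->
  GS (Sel j.+1 j.+1 (fun x => if x == 0 then j else x.-1)).
Proof.
move=> He; elim: j => [|j IH]; first by apply: GS_id => -[].
apply: (@GS_comp j.+2 j.+2 j.+2
   (fun x => if x < 1 then 0 else 1 + (if x - 1 == 0 then j else (x - 1).-1))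
   (fun x => if x < 2 then (if x == 0 then 1 else 0) else 2 + (x - 2))).
- apply: (@GS_prod 1 1 j.+1 j.+1 (fun _ => 0) (fun x => if x == 0 then j else x.-1)) => //.
  by apply: GS_id => -[].
- apply: (@GS_prod 2 2 j j (fun x => if x == 0 then 1 else 0) id) => //.
  + by move=> [|[|]].
  + by apply: GS_swap.
  + by apply: GS_id.
- move=> [|[|x]] Hx //=; lia.
- move=> [|[|x]] Hx //=; lia.
Qed.

Lemma GS_mv i j K : has_e a -> K = i + j.+1 ->
  GS (Sel K K (fun x => if x < i then x else if x == i then i + j else x.-1)).
Proof.
move=> He EK.
apply: (@GS_prod i i j.+1 j.+1 id (fun x => if x == 0 then j else x.-1)) => //.
- exact: (@GS_id i id (fun _ _ => erefl)).
- exact: (GS_rot j He).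
- move=> x Hx; case: ifP => // Hxi.
  case: eqP => [->|Hne]; first by rewrite subnn.
  have -> : (x - i == 0) = false by apply/eqP; lia.
  lia.
Qed.

Lemma perm_iota_lt (Is : seq nat) k j : perm_eq Is (iota 0 k) -> j < size Is -> nth 0 Is j < k.
Proof. by move=> Hp Hj; have := mem_nth 0 Hj; rewrite (perm_mem Hp) mem_iota. Qed.

Lemma GS_perm k Is : has_e a -> perm_eq Is (iota 0 k) -> GS (Sel k k (nth 0 Is)).
Proof.
move=> He; elim: k Is => [|k IH] Is Hp.
  by apply: GS_id => j.
have kin : k \in Is by rewrite (perm_mem Hp) mem_iota add0n ltnSn.
move: Hp; case/splitPr: kin => p q Hp.
have Hp' : perm_eq (p ++ q) (iota 0 k).
  move: Hp; rewrite -addn1 iotaD add0n /=.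
  rewrite -cat1s perm_catCA /= => Hp.
  by rewrite -(perm_cons k) (perm_trans Hp) // perm_catC.
have Sz : size (p ++ q) = k by rewrite (perm_size Hp') size_iota.
apply: (@GS_comp k.+1 k.+1 k.+1 (nth 0 (p ++ q ++ [:: k]))
   (fun x => if x < size p then x else if x == size p then size p + size q else x.-1)).
- apply: (@GS_prod k k 1 1 (nth 0 (p ++ q)) (fun _ => 0)) => //.
  + by move=> j Hj; apply: perm_iota_lt Hp' _; rewrite Sz.
  + exact: IH.
  + by apply: GS_id => -[].
  + by rewrite addn1.
  + by rewrite addn1.
  + move=> j Hj; rewrite catA nth_cat Sz; case: ifP => // Hjk.
    have -> : j = k by lia.
    by rewrite subnn addn0.
- apply: GS_mv => //; move: Sz; rewrite size_cat; lia.
- move=> x Hx; move: Sz; rewrite size_cat; case: ifP => H; first lia.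
  case: ifP => H'; lia.
- move=> x Hx; move: Sz; rewrite size_cat => Sz.
  rewrite catA; case: ifP => H1.
    by rewrite !nth_cat size_cat H1 (ltn_addr _ H1).
  case: eqP => [->|Hne].
    by rewrite nth_cat ltnn subnn /= nth_cat size_cat ltnn subnn.
  have Hq : x.-1 < size p + size q by lia.
  have Hp1 : (x.-1 < size p) = false by lia.
  rewrite nth_cat H1 nth_cat size_cat Hq nth_cat Hp1.
  have -> : x - size p = (x.-1 - size p).+1 by lia.
  by [].
Qed.

Lemma GS_any m s : has_e a -> all (fun i => i < m) s ->
  has_w a || all (fun i => i \in s) (iota 0 m) -> has_c a || uniq s ->
  GS (Sel m (size s) (nth 0 s)).
Proof.
move=> He Hall Hcov Hu.
set t := sort leq s.
have pst : perm_eq s t by rewrite perm_sym /t perm_sort perm_refl.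
case/(perm_iotaP 0): (pst) => Is HIs Es.
have Sz : size t = size s by rewrite (perm_size pst).
have SzI : size Is = size s by rewrite (perm_size HIs) size_iota.
apply: (@GS_comp m (size t) (size s) (nth 0 t) (nth 0 Is)).
- apply: GS_sorted.
  + by rewrite -(perm_all _ pst).
  + exact: sort_sorted leq_total _.
  + case/orP: Hcov => [->//|/allP Hc]; apply/orP; right; apply/allP => i Hi.
    by rewrite -(perm_mem pst); apply: Hc.
  + by rewrite -(perm_uniq pst).
- by rewrite -Sz; apply: GS_perm.
- by move=> j Hj; apply: perm_iota_lt HIs _; rewrite SzI.
- by move=> j Hj; rewrite {1}Es (nth_map 0) // SzI.
Qed.

Lemma GS_occ m s : all (fun i => i < m) s ->
  has_w a || all (fun i => i \in s) (iota 0 m) ->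
  has_e a || sorted leq s -> has_c a || uniq s ->
  GS (Sel m (size s) (nth 0 s)).
Proof.
move=> Hall Hcov Hs Hu.
case He: (has_e a); first exact: GS_any.
by apply: GS_sorted => //; move: Hs; rewrite He.
Qed.

Fixpoint lev m (t : term m) (y : nat -> I) : I :=
  match t with
  | tVar _ => y 0
  | tZero => i0 R
  | tOne => i1 R
  | tJoin t1 t2 => imax (lev t1 y) (lev t2 (fun i => y (i + size (occ t1))))
  | tMeet t1 t2 => imin (lev t1 y) (lev t2 (fun i => y (i + size (occ t1))))
  | tNeg t1 => icompl (lev t1 y)
  end.

Fixpoint levs m (ts : seq (term m)) (y : nat -> I) (j : nat) : I :=
  match ts with
  | [::] => i0 R
  | t :: ts' => if j is j'.+1 then levs ts' (fun i => y (i + size (occ t))) j'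
                else lev t y
  end.

Lemma lev_loc m (t : term m) y y' :
  (forall i, i < size (occ t) -> y i = y' i) -> lev t y = lev t y'.
Proof.
elim: t y y' => [i|||t1 IH1 t2 IH2|t1 IH1 t2 IH2|t1 IH1] y y' H //=.
- exact: H.
- rewrite (IH1 y y'); last by move=> i Hi; apply: H; rewrite size_cat ltn_addr.
  rewrite (IH2 _ (fun i => y' (i + size (occ t1)))) //.
  by move=> i Hi; apply: H; rewrite size_cat addnC ltn_add2l.
- rewrite (IH1 y y'); last by move=> i Hi; apply: H; rewrite size_cat ltn_addr.
  rewrite (IH2 _ (fun i => y' (i + size (occ t1)))) //.
  by move=> i Hi; apply: H; rewrite size_cat addnC ltn_add2l.
- by rewrite (IH1 y y').
Qed.

Lemma levs_loc m (ts : seq (term m)) y y' j :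
  (forall i, i < size (flatten (map (@occ m) ts)) -> y i = y' i) ->
  levs ts y j = levs ts y' j.
Proof.
elim: ts y y' j => [//|t ts IH] y y' [|j] H /=.
  by apply: lev_loc => i Hi; apply: H; rewrite /= size_cat ltn_addr.
apply: IH => i Hi; apply: H; rewrite /= size_cat addnC ltn_add2l //.
Qed.

Lemma lev_eval m (x : cube m) (t : term m) :
  lev t (fun i => ext x (nth 0 (occ t) i)) = eval R x t.
Proof.
elim: t => [i|||t1 IH1 t2 IH2|t1 IH1 t2 IH2|t1 IH1] //=.
- by rewrite extE.
- rewrite -IH1 -IH2; congr imax.
    by apply: lev_loc => i Hi; rewrite nth_cat Hi.
  congr lev; apply: funext => i.
  by rewrite nth_cat ltnNge leq_addl /= addnK.
- rewrite -IH1 -IH2; congr imin.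
    by apply: lev_loc => i Hi; rewrite nth_cat Hi.
  congr lev; apply: funext => i.
  by rewrite nth_cat ltnNge leq_addl /= addnK.
- by rewrite IH1.
Qed.

Lemma levs_eval m (x : cube m) (ts : seq (term m)) j :
  levs ts (fun i => ext x (nth 0 (flatten (map (@occ m) ts)) i)) j =
  eval R x (nth tZero ts j).
Proof.
elim: ts j => [|t ts IH] [|j] //=.
  rewrite -lev_eval; apply: lev_loc => i Hi; by rewrite nth_cat Hi.
rewrite -IH; congr levs; apply: funext => i.
by rewrite nth_cat ltnNge leq_addl /= addnK.
Qed.

Lemma GS_lev m (t : term m) : in_sig b t -> forall k, k = size (occ t) ->
  GS (fun y : cube k => fun _ : 'I_1 => lev t (ext y)).
Proof.
elim: t => [i|||t1 IH1 t2 IH2|t1 IH1 t2 IH2|t1 IH1] /= Hs k Hk.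
- subst k; have -> : (fun (y : cube 1) (_ : 'I_1) => ext y 0) = id.
    apply: funext => y; apply: funext => -[[|//] H].
    by rewrite (extO _ H).
  exact: genS_id.
- by subst k; exact: genS_zero.
- by subst k; exact: genS_one.
- case/and3P: Hs => Hj H1 H2; rewrite size_cat in Hk; subst k.
  have -> : (fun (y : cube (size (occ t1) + size (occ t2))) (_ : 'I_1) =>
      imax (lev t1 (ext y)) (lev t2 (fun i => ext y (i + size (occ t1))))) =
      @max_map R \o prod_map (fun y : cube (size (occ t1)) => fun _ : 'I_1 => lev t1 (ext y))
                            (fun y : cube (size (occ t2)) => fun _ : 'I_1 => lev t2 (ext y)).
    apply: funext => y; apply: funext => j /=; rewrite /max_map /prod_map.
    case: splitP => [i0' _|i0' Hi0] /=; last by move: Hi0.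
    case: splitP => [i1' Hi1|i1' _] /=; first by move: (ltn_ord i1'); rewrite -Hi1.
    congr imax.
      by apply: lev_loc => i Hi; rewrite ext_lshift.
    by congr lev; apply: funext => i; rewrite ext_rshift (addnC i).
  apply: genS_comp; last exact: genS_max.
  have G := genS_prod (IH1 H1 _ erefl) (IH2 H2 _ erefl); exact: G.
- case/and3P: Hs => Hj H1 H2; rewrite size_cat in Hk; subst k.
  have -> : (fun (y : cube (size (occ t1) + size (occ t2))) (_ : 'I_1) =>
      imin (lev t1 (ext y)) (lev t2 (fun i => ext y (i + size (occ t1))))) =
      @min_map R \o prod_map (fun y : cube (size (occ t1)) => fun _ : 'I_1 => lev t1 (ext y))
                            (fun y : cube (size (occ t2)) => fun _ : 'I_1 => lev t2 (ext y)).
    apply: funext => y; apply: funext => j /=; rewrite /min_map /prod_map.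
    case: splitP => [i0' _|i0' Hi0] /=; last by move: Hi0.
    case: splitP => [i1' Hi1|i1' _] /=; first by move: (ltn_ord i1'); rewrite -Hi1.
    congr imin.
      by apply: lev_loc => i Hi; rewrite ext_lshift.
    by congr lev; apply: funext => i; rewrite ext_rshift (addnC i).
  apply: genS_comp; last exact: genS_min.
  have G := genS_prod (IH1 H1 _ erefl) (IH2 H2 _ erefl); exact: G.
- case/andP: Hs => Hn H1; subst k.
  have -> : (fun (y : cube (size (occ t1))) (_ : 'I_1) => icompl (lev t1 (ext y))) =
      @compl_map R \o (fun y : cube (size (occ t1)) => fun _ : 'I_1 => lev t1 (ext y)).
    by [].
  apply: genS_comp; last exact: genS_compl.
  exact: IH1.
Qed.

Lemma GS_levs m (ts : seq (term m)) : all (@in_sig b m) ts ->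
  forall k n, k = size (flatten (map (@occ m) ts)) -> n = size ts ->
  GS (fun y : cube k => fun j : 'I_n => levs ts (ext y) j).
Proof.
elim: ts => [|t ts IH] /= Hs k n Hk Hn; subst k n.
  have -> : (fun (y : cube 0) (j : 'I_0) => i0 R) = id.
    by apply: funext => y; apply: funext => -[].
  exact: genS_id.
case/andP: Hs => H1 H2; rewrite size_cat.
have -> : (fun (y : cube (size (occ t) + size (flatten (map (@occ m) ts)))) (j : 'I_(size ts).+1) =>
     levs (t :: ts) (ext y) j) =
   prod_map (fun y : cube (size (occ t)) => fun _ : 'I_1 => lev t (ext y))
            (fun y : cube (size (flatten (map (@occ m) ts))) => fun j : 'I_(size ts) => levs ts (ext y) j).
  apply: funext => y; apply: funext => j /=; rewrite /prod_map.
  case: splitP => [i Hi|i Hi]; rewrite Hi.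
    have -> : nat_of_ord i = 0 by case: i {Hi} => -[].
    by apply: lev_loc => i' Hi'; rewrite ext_lshift.
  rewrite add1n /=; congr levs; apply: funext => i'.
  by rewrite ext_rshift (addnC i').
have G := genS_prod (GS_lev H1 erefl) (IH H2 _ _ erefl erefl); exact: G.
Qed.

Lemma GS_interp m n (ts : n.-tuple (term m)) : admissible_tuple a b ts ->
  GS (interp R ts).
Proof.
case/and4P=> Hsig Hcov Hsort Huniq.
set s := tuple_occ ts.
have Hall : all (fun i => i < m) s.
  rewrite /s /tuple_occ; elim: (tval ts) => [//|t ts' IH] /=.
  rewrite all_cat IH andbT.
  elim: t {IH} => [i|||t1 IH1 t2 IH2|t1 IH1 t2 IH2|t1 IH1] //=; rewrite ?all_cat ?IH1 ?IH2 //.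
  by rewrite andbT ltn_ord.
have -> : interp R ts =
   (fun y : cube (size s) => fun j : 'I_n => levs ts (ext y) j) \o Sel m (size s) (nth 0 s).
  apply: funext => x; apply: funext => j /=.
  rewrite /interp (tnth_nth tZero) -levs_eval; apply: levs_loc => i Hi.
  by rewrite /Sel (extO _ Hi).
apply: genS_comp; first exact: GS_occ.
by apply: GS_levs => //; rewrite size_tuple.
Qed.

Lemma occ_lt m (t : term m) : all (fun i => i < m) (occ t).
Proof.
elim: t => [i|||t1 IH1 t2 IH2|t1 IH1 t2 IH2|t1 IH1] //=; rewrite ?all_cat ?IH1 ?IH2 //.
by rewrite andbT ltn_ord.
Qed.

Lemma tuple_occ_lt m (ts : seq (term m)) : all (fun i => i < m) (flatten (map (@occ m) ts)).
Proof. by elim: ts => [//|t ts IH] /=; rewrite all_cat IH occ_lt. Qed.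

Lemma part1 m : admissible_tuple a b (id_tuple m) /\ interp R (id_tuple m) = id.
Proof.
have E : tuple_occ (id_tuple m) = iota 0 m.
  rewrite /tuple_occ -val_enum_ord.
  have -> : tval (id_tuple m) = [seq tVar i | i <- enum 'I_m] by [].
  by rewrite -map_comp; elim: (enum 'I_m) => //= i s ->.
split.
  rewrite /admissible_tuple E iota_sorted iota_uniq !orbT andbT.
  apply/andP; split; last by rewrite andbT; apply/orP; right; apply/allP.
  by have -> : tval (id_tuple m) = [seq tVar i | i <- enum 'I_m] by []; rewrite all_map; apply/allP.
apply: funext => x; apply: funext => k.
by rewrite /interp /id_tuple tnth_mktuple.
Qed.

Lemma in_sig_subst m n (ts : n.-tuple (term m)) (t : term n) :
  all (@in_sig b m) ts -> in_sig b t -> in_sig b (subst ts t).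
Proof.
move=> Hts; elim: t => [i|||t1 IH1 t2 IH2|t1 IH1 t2 IH2|t1 IH1] //=.
- by move=> _; apply: (all_tnthP Hts).
- by case/and3P=> -> /IH1 -> /IH2 ->.
- by case/and3P=> -> /IH1 -> /IH2 ->.
- by case/andP=> -> /IH1 ->.
Qed.

Lemma occ_subst m n (ts : n.-tuple (term m)) (t : term n) :
  occ (subst ts t) = flatten (map (nth [::] (map (@occ m) ts)) (occ t)).
Proof.
elim: t => [i|||t1 IH1 t2 IH2|t1 IH1 t2 IH2|t1 IH1] //=.
- by rewrite cats0 (nth_map tZero) ?size_tuple // (tnth_nth tZero).
- by rewrite IH1 IH2 map_cat flatten_cat.
- by rewrite IH1 IH2 map_cat flatten_cat.
Qed.

Lemma flatten_subseq (A B : seq (seq nat)) : subseq A B -> subseq (flatten A) (flatten B).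
Proof.
elim: B A => [|x B IH] A; first by rewrite subseq0 => /eqP ->.
case: A => [|y A]; first by move=> _; apply: sub0seq.
rewrite /=; case: eqP => [->|_] H.
  by apply: cat_subseq => //; apply: IH.
apply: subseq_trans (suffix_subseq _ _).
by move/IH: H.
Qed.

Lemma comp_conds (O : seq (seq nat)) (u : seq nat) :
  all (fun j => j < size O) u -> uniq u ->
  (perm_eq (flatten (map (nth [::] O) u))
           (flatten (map (nth [::] O) [seq j <- iota 0 (size O) | j \in u])) *
   (subseq (flatten (map (nth [::] O) [seq j <- iota 0 (size O) | j \in u])) (flatten O)) *
   (sorted leq u -> u = [seq j <- iota 0 (size O) | j \in u])).
Proof.
move=> Hall Hu.
have Eu : u =i [seq j <- iota 0 (size O) | j \in u].
  move=> j; rewrite mem_filter mem_iota /= add0n.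
  by case Hj: (j \in u) => //=; rewrite (allP Hall).
split; [split|].
- apply: perm_flatten; apply: perm_map; apply: uniq_perm => //.
  by rewrite filter_uniq ?iota_uniq.
- apply: flatten_subseq.
  have HO : map (nth [::] O) (iota 0 (size O)) = O by rewrite (map_nth_iota0 [::]) // take_size.
  rewrite -[X in subseq _ X]HO.
  by apply: map_subseq; apply: filter_subseq.
- move=> Hs; apply: (irr_sorted_eq ltn_trans ltnn) => //.
    by rewrite ltn_sorted_uniq_leq Hu.
  by apply: sorted_filter; [exact: ltn_trans | exact: iota_ltn_sorted].
Qed.

Lemma part2 m n p (ts : n.-tuple (term m)) (us : p.-tuple (term n)) :
  admissible_tuple a b ts -> admissible_tuple a b us ->
  admissible_tuple a b (comp_tuple ts us).
Proof.
set O := map (@occ m) ts.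
have SO : size O = n by rewrite size_map size_tuple.
have E : tuple_occ (comp_tuple ts us) = flatten (map (nth [::] O) (tuple_occ us)).
  rewrite /tuple_occ /comp_tuple /=.
  rewrite -map_comp (eq_map (occ_subst ts)).
  by elim: (tval us) => //= u us' ->; rewrite map_cat flatten_cat.
have EO : tuple_occ ts = flatten O by [].
have Hall : all (fun j => j < size O) (tuple_occ us) by rewrite SO tuple_occ_lt.
case/and4P=> S1 W1 E1 C1 /and4P[S2 W2 E2 C2].
rewrite /admissible_tuple E; apply/and4P; split.
- by rewrite /comp_tuple /= all_map; apply: sub_all S2 => t /=; apply: in_sig_subst.
- case Hw: (has_w a) => //=; rewrite Hw /= in W1 W2.
  apply/allP => i Hi; move: (allP W1 i Hi); rewrite EO => /flattenP[s Hs His].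
  case/(nthP [::]): Hs => j Hj Ej.
  apply/flattenP; exists s => //; apply/mapP; exists j => //.
  by apply: (allP W2); rewrite mem_iota -SO.
- case He: (has_e a) => //=; rewrite He /= in E1 E2.
  have Hc : has_c a = false by move: Ha; rewrite /admissible_rules He; case: (has_c a).
  rewrite Hc /= in C1 C2.
  have [[_ Hsub] Heq] := comp_conds Hall C2.
  rewrite (Heq E2); apply: subseq_sorted Hsub _ => //; exact: leq_trans.
- case Hc: (has_c a) => //=; rewrite Hc /= in C1 C2.
  have [[Hperm Hsub] _] := comp_conds Hall C2.
  by rewrite (perm_uniq Hperm); apply: subseq_uniq Hsub _.
Qed.

Lemma eval_subst m n (ts : n.-tuple (term m)) (t : term n) (x : cube m) :
  eval R x (subst ts t) = eval R (interp R ts x) t.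
Proof. by elim: t => //= [t1 -> t2 ->|t1 -> t2 ->|t1 ->]. Qed.

Lemma part2i m n p (ts : n.-tuple (term m)) (us : p.-tuple (term n)) :
  interp R (comp_tuple ts us) = interp R us \o interp R ts.
Proof.
apply: funext => x; apply: funext => k.
by rewrite /interp /comp_tuple /= tnth_map eval_subst.
Qed.

Lemma occ_rename m m' (f : 'I_m -> 'I_m') (g : nat -> nat) (t : term m) :
  (forall i, nat_of_ord (f i) = g i) -> occ (rename f t) = map g (occ t).
Proof.
move=> H; elim: t => [i|||t1 IH1 t2 IH2|t1 IH1 t2 IH2|t1 IH1] //=.
- by rewrite H.
- by rewrite IH1 IH2 map_cat.
- by rewrite IH1 IH2 map_cat.
Qed.

Lemma in_sig_rename m m' (f : 'I_m -> 'I_m') (t : term m) :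
  in_sig b (rename f t) = in_sig b t.
Proof. by elim: t => //= [t1 -> t2 ->|t1 -> t2 ->|t1 ->]. Qed.

Lemma eval_rename m m' (f : 'I_m -> 'I_m') (t : term m) (x : cube m') :
  eval R x (rename f t) = eval R (fun i => x (f i)) t.
Proof. by elim: t => //= [t1 -> t2 ->|t1 -> t2 ->|t1 ->]. Qed.

Lemma sorted_cat_leq (s1 s2 : seq nat) : sorted leq s1 -> sorted leq s2 ->
  (forall x y, x \in s1 -> y \in s2 -> x <= y) -> sorted leq (s1 ++ s2).
Proof.
case: s1 => [//|x s1] /= H1 H2 H.
rewrite cat_path H1 /=.
case: s2 H2 H => [//|y s2] /= H2 H; rewrite H2 andbT.
by apply: H; [exact: mem_last | rewrite inE eqxx].
Qed.

Lemma part3 m n m' n' (ts : n.-tuple (term m)) (ts' : n'.-tuple (term m')) :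
  admissible_tuple a b ts -> admissible_tuple a b ts' ->
  admissible_tuple a b (tensor_tuple ts ts').
Proof.
have E : tuple_occ (tensor_tuple ts ts') = tuple_occ ts ++ map (addn m) (tuple_occ ts').
  rewrite /tuple_occ /tensor_tuple /= map_cat flatten_cat -!map_comp.
  congr (_ ++ _).
    by elim: (tval ts) => //= t s ->; rewrite (@occ_rename _ _ _ id) ?map_id.
  rewrite map_flatten.
  by elim: (tval ts') => //= t s ->; rewrite (@occ_rename _ _ _ (addn m)).
have L1 := tuple_occ_lt ts; have L2 := tuple_occ_lt ts'.
case/and4P=> S1 W1 E1 C1 /and4P[S2 W2 E2 C2].
rewrite /admissible_tuple E; apply/and4P; split.
- rewrite /tensor_tuple /= all_cat !all_map.
  by apply/andP; split; [apply: sub_all S1 | apply: sub_all S2] => t /=; rewrite in_sig_rename.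
- case Hw: (has_w a) => //=; rewrite Hw /= in W1 W2.
  apply/allP => i; rewrite mem_iota add0n /= mem_cat => Hi.
  case: (ltnP i m) => Him.
    by rewrite (allP W1) // mem_iota.
  apply/orP; right; apply/mapP; exists (i - m); last by rewrite subnKC.
  by rewrite (allP W2) // mem_iota /= add0n ltn_subLR.
- case He: (has_e a) => //=; rewrite He /= in E1 E2.
  apply: sorted_cat_leq => //.
    by apply: homo_sorted E2 => x y; rewrite leq_add2l.
  move=> x y Hx /mapP[z _ ->]; apply: ltnW; apply: leq_trans (leq_addr _ _).
  exact: (allP L1).
- case Hc: (has_c a) => //=; rewrite Hc /= in C1 C2.
  rewrite cat_uniq C1 map_inj_uniq ?C2 ?andbT; last exact: addnI.
  apply/hasPn => y /mapP[z _ ->]; apply/negP => /(allP L1).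
  by rewrite ltnNge leq_addr.
Qed.

Lemma part3i m n m' n' (ts : n.-tuple (term m)) (ts' : n'.-tuple (term m')) :
  interp R (tensor_tuple ts ts') = prod_map (interp R ts) (interp R ts').
Proof.
apply: funext => x; apply: funext => k.
rewrite /interp /prod_map; case: splitP => i Hi.
  have -> : k = lshift n' i by apply: val_inj.
  by rewrite /tensor_tuple tnth_lshift tnth_map eval_rename.
have -> : k = rshift n i by apply: val_inj.
by rewrite /tensor_tuple tnth_rshift tnth_map eval_rename.
Qed.

Lemma part4 m n (f : cube m -> cube n) :
  GS f <-> exists ts : n.-tuple (term m), admissible_tuple a b ts /\ interp R ts = f.
Proof.
split; last by case=> ts [Hts <-]; exact: GS_interp.
elim=> {m n f}.
- by move=> n; exists (id_tuple n); exact: part1.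
- exists [tuple tZero]; split; first by rewrite /admissible_tuple /= !orbT.
  apply: funext => x; apply: funext => -[[|k] Hk] //=.
- exists [tuple tOne]; split; first by rewrite /admissible_tuple /= !orbT.
  apply: funext => x; apply: funext => -[[|k] Hk] //=.
- move=> Hj; exists [tuple tJoin (tVar ord0) (tVar (@ord_max 1))]; split.
    by rewrite /admissible_tuple /= Hj !orbT.
  apply: funext => x; apply: funext => -[[|k] Hk] //=.
- move=> Hm; exists [tuple tMeet (tVar ord0) (tVar (@ord_max 1))]; split.
    by rewrite /admissible_tuple /= Hm !orbT.
  apply: funext => x; apply: funext => -[[|k] Hk] //=.
- move=> Hn; exists [tuple tNeg (tVar (@ord0 0))]; split.
    by rewrite /admissible_tuple /= Hn !orbT.
  apply: funext => x; apply: funext => -[[|k] Hk] //=.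
- move=> Hw; exists [tuple]; split.
    by rewrite /admissible_tuple /= Hw !orbT.
  by apply: funext => x; apply: funext => -[].
- move=> He; exists [tuple tVar (@ord_max 1); tVar ord0]; split.
    by rewrite /admissible_tuple /= He !orbT.
  apply: funext => x; apply: funext => -[[|[|k]] Hk] //=.
- move=> Hc; exists [tuple tVar (@ord0 0); tVar ord0]; split.
    by rewrite /admissible_tuple /= Hc !orbT.
  apply: funext => x; apply: funext => -[[|[|k]] Hk] //=.
- move=> m n p f g _ [ts [Hts <-]] _ [us [Hus <-]].
  exists (comp_tuple ts us); split; first exact: part2.
  exact: part2i.
- move=> m n m' n' f g _ [ts [Hts <-]] _ [ts' [Hts' <-]].
  exists (tensor_tuple ts ts'); split; first exact: part3.
  exact: part3i.
Qed.

End Main.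

Theorem proposition1 (R : realType) (a : struct_rules) (b : signature) :
  admissible_rules a -> admissible_sig b ->
  [/\ (* identities *)
      forall m, admissible_tuple a b (id_tuple m) /\
                interp R (id_tuple m) = id,
      (* composition *)
      forall m n p (ts : n.-tuple (term m)) (us : p.-tuple (term n)),
        admissible_tuple a b ts -> admissible_tuple a b us ->
        admissible_tuple a b (comp_tuple ts us) /\
        interp R (comp_tuple ts us) = interp R us \o interp R ts,
      (* monoidal product *)
      forall m n m' n' (ts : n.-tuple (term m)) (ts' : n'.-tuple (term m')),
        admissible_tuple a b ts -> admissible_tuple a b ts' ->
        admissible_tuple a b (tensor_tuple ts ts') /\
        interp R (tensor_tuple ts ts') = prod_map (interp R ts) (interp R ts') &
      (* hom-sets: image of C_(a,b)([m],[n]) is exactly S_(a,b)([0,1]^m,[0,1]^n) *)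
      forall m n (f : cube R m -> cube R n),
        genS a b f <->
        exists ts : n.-tuple (term m), admissible_tuple a b ts /\ interp R ts = f].
Proof.
move=> Ha Hb; split.
- exact: part1.
- by move=> m n p ts us H1 H2; split; [apply: part2 | apply: part2i].
- by move=> m n m' n' ts ts' H1 H2; split; [apply: part3 | apply: part3i].
- by move=> m n f; apply: part4.
Qed.
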